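(* In the unique symmetric subgame perfect equilibrium of the pay-to-bid game, both with and without re-entry, in any round the probability that a given bidding player (a player who plays Bid in that round) wins the object in that round equals $\frac{u(c)}{u(v-s)}$.
   Context: Pay-to-bid game: an object has monetary value $v>0$ that is common knowledge; there are $n\ge 2$ players; the bid fee is $c>0$ and the fixed sale price is $s\ge 0$, with $c<v-s$. Play proceeds in rounds $t=1,2,3,\dots$ with complete information. In each round every active player simultaneously chooses an action in $\{\text{Bid},\text{No Bid}\}$. Each Bid costs $c$, paid immediately to the seller. If exactly one active player bids in a round, she wins the object (value $v$), pays $s$, and the game ends; if two or more bid, play continues; if none bids, the round is replayed. With re-entry, all $n$ players are active in every round; without re-entry, the active players in round $t+1$ are those who bid in round $t$. Players do not discount; payoff is $u$(final wealth) with $u(x)=\frac{1-e^{-\rho x}}{\rho}$ for a constant $\rho<0$, or $u(x)=x$ when $\rho=0$. A bidder wins in a round exactly when all other active players play No Bid in that round. *)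

(* Defs.v *)
From Stdlib Require Import Reals Lra List Arith Bool.
Import ListNotations.
Open Scope R_scope.

Definition util (rho x : R) : R :=
  if Req_EM_T rho 0 then x else (1 - exp (- rho * x)) / rho.

(** An action profile of one round: entry i = true iff player i plays Bid.
    Players are 0 .. n-1. *)
Definition profile := list bool.
(** A history: the list of past rounds' action profiles, in chronological order. *)
Definition history := list profile.

Definition bids (a : profile) (i : nat) : bool := nth i a false.
Definition nbidders (a : profile) : nat := length (filter (fun b => b) a).

Definition ended (h : history) : bool := existsb (fun a => Nat.eqb (nbidders a) 1) h.

Definition won (i : nat) (h : history) : bool :=
  existsb (fun a => Nat.eqb (nbidders a) 1 && bids a i) h.

Fixpoint all_profiles (n : nat) : list profile :=
  match n with
  | O => [nil]
  | S m => flat_map (fun a => [true :: a; false :: a]) (all_profiles m)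
  end.

Section Game.
Variables (n : nat) (reentry : bool) (rho c v s : R).

(** With re-entry everybody is always active;
    without re-entry the active players of the next round are those who bid,
    except when nobody bid (round replayed with the same active players). *)
Definition active_step (act : nat -> bool) (a : profile) : nat -> bool :=
  if reentry then act
  else if Nat.eqb (nbidders a) 0 then act else (fun i => bids a i).

Definition active (h : history) (i : nat) : bool :=
  Nat.ltb i n && fold_left active_step h (fun _ => true) i.

(** Final (or current) wealth of player i, starting from wealth 0:
    each Bid costs c; the winner receives v and pays s. *)
Definition wealth (i : nat) (h : history) : R :=
  - c * INR (length (filter (fun a => bids a i) h))
  + (if won i h then v - s else 0).

(** Behavioral strategy profile: sigma i h = probability that player i plays
    Bid at history h. *)
Definition strategy_profile := nat -> history -> R.

Definition valid_profile (sigma : strategy_profile) : Prop :=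
  forall i h, 0 <= sigma i h <= 1.

(** Probability of a round profile a (entries starting at player index k),
    players acting independently; inactive players play No Bid. *)
Fixpoint prof_prob (q : nat -> R) (act : nat -> bool) (a : profile) (k : nat) : R :=
  match a with
  | nil => 1
  | b :: a' =>
      (if act k then (if b then q k else 1 - q k) else (if b then 0 else 1))
      * prof_prob q act a' (S k)
  end.

(** Expected utility of player i from history h, truncated after T more rounds
    (a play not yet ended at the horizon is evaluated at current wealth). *)
Fixpoint EU (sigma : strategy_profile) (i : nat) (h : history) (T : nat) : R :=
  match T with
  | O => util rho (wealth i h)
  | S T' =>
      if ended h then util rho (wealth i h)
      else fold_right Rplus 0
             (map (fun a => prof_prob (fun j => sigma j h) (active h) a 0
                            * EU sigma i (h ++ [a]) T')
                  (all_profiles n))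
  end.

Inductive valid_history : history -> Prop :=
| vh_nil : valid_history nil
| vh_snoc : forall h a,
    valid_history h -> ended h = false -> length a = n ->
    (forall i, bids a i = true -> active h i = true) ->
    valid_history (h ++ [a]).

Definition deviate (sigma : strategy_profile) (i : nat) (tau : history -> R)
  : strategy_profile :=
  fun j h => if Nat.eqb j i then tau h else sigma j h.

(** Subgame perfect equilibrium: in every subgame (valid non-ended history),
    each player's expected utility (limit of the truncated expected utilities)
    exists and no deviation does better (limsup of the deviator's truncated
    expected utilities is at most the equilibrium value). *)
Definition is_SPE (sigma : strategy_profile) : Prop :=
  valid_profile sigma /\
  forall h, valid_history h -> ended h = false ->
  forall i, (i < n)%nat ->
  exists V, Un_cv (fun T => EU sigma i h T) V /\
    forall tau : history -> R, (forall h', 0 <= tau h' <= 1) ->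
    forall eps, eps > 0 -> exists N, forall T, (T >= N)%nat ->
      EU (deviate sigma i tau) i h T <= V + eps.

Definition symmetric (sigma : strategy_profile) : Prop :=
  forall h i j, valid_history h -> active h i = true -> active h j = true ->
    sigma i h = sigma j h.

(** Probability that a bidding player i wins at history h: all other active
    players play No Bid. *)
Definition win_prob_if_bid (sigma : strategy_profile) (h : history) (i : nat) : R :=
  fold_right Rmult 1
    (map (fun j => if active h j && negb (Nat.eqb j i) then 1 - sigma j h else 1)
         (seq 0 n)).

End Game.

(* Main.v *)
Require Import Defs.
From Stdlib Require Import Reals Lra Lia List Arith Bool ClassicalEpsilon.
Import ListNotations.
Open Scope R_scope.


Definition sumL (L : list profile) (f : profile -> R) : R := fold_right Rplus 0 (map f L).

Lemma sumL_ext L f g : (forall a, In a L -> f a = g a) -> sumL L f = sumL L g.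
Proof. induction L; unfold sumL in *; simpl; intros H; auto. rewrite H by auto. rewrite IHL; auto. Qed.

Lemma sumL_plus L f g : sumL L (fun a => f a + g a) = sumL L f + sumL L g.
Proof. induction L; unfold sumL in *; simpl; [lra|]. rewrite IHL. lra. Qed.

Lemma sumL_scal L k f : sumL L (fun a => k * f a) = k * sumL L f.
Proof. induction L; unfold sumL in *; simpl; [lra|]. rewrite IHL. lra. Qed.

Lemma sumL_minus L f g : sumL L (fun a => f a - g a) = sumL L f - sumL L g.
Proof. induction L; unfold sumL in *; simpl; [lra|]. rewrite IHL. lra. Qed.

Lemma sumL_le L f g : (forall a, In a L -> f a <= g a) -> sumL L f <= sumL L g.
Proof. induction L; unfold sumL in *; simpl; intros H; [lra|].
  specialize (IHL (fun x hx => H x (or_intror hx))). specialize (H a (or_introl eq_refl)). lra. Qed.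

Lemma sumL_nonneg L f : (forall a, In a L -> 0 <= f a) -> 0 <= sumL L f.
Proof. intros H. replace 0 with (sumL L (fun _ => 0)). apply sumL_le; auto.
  clear H; induction L; unfold sumL in *; simpl; auto. rewrite IHL; lra. Qed.

Lemma sumL_zero L : sumL L (fun _ => 0) = 0.
Proof. induction L; unfold sumL in *; simpl; auto. rewrite IHL; lra. Qed.

Lemma sumL_single_le L f x : In x L -> (forall a, In a L -> 0 <= f a) -> f x <= sumL L f.
Proof. induction L; simpl; intros Hx H; [contradiction|]. unfold sumL in *; simpl.
  destruct Hx as [->|Hx].
  - assert (0 <= fold_right Rplus 0 (map f L)) by (apply (sumL_nonneg L f); auto). lra.
  - specialize (IHL Hx (fun a h => H a (or_intror h))). specialize (H a (or_introl eq_refl)). lra. Qed.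

Lemma sumL_flat L (F : profile -> R) :
  sumL (flat_map (fun a => [true :: a; false :: a]) L) F = sumL L (fun a => F (true :: a) + F (false :: a)).
Proof. induction L; unfold sumL in *; simpl; auto. rewrite IHL. lra. Qed.

Lemma all_profiles_length m a : In a (all_profiles m) <-> length a = m.
Proof.
  revert a; induction m; intros a; simpl.
  - split. intros [<-|[]]; auto. destruct a; simpl; intros; [auto|discriminate].
  - rewrite in_flat_map. split.
    + intros [x [Hx Ha]]. simpl in Ha. apply IHm in Hx. destruct Ha as [<-|[<-|[]]]; simpl; auto.
    + intros Hl. destruct a as [|b a]; simpl in Hl; [discriminate|]. exists a. split.
      apply IHm; lia. destruct b; simpl; auto.
Qed.

Definition fac (Q : nat -> R) (act : nat -> bool) (k : nat) (b : bool) : R :=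
  if act k then (if b then Q k else 1 - Q k) else (if b then 0 else 1).

Lemma prof_prob_cons Q act b a k : prof_prob Q act (b :: a) k = fac Q act k b * prof_prob Q act a (S k).
Proof. reflexivity. Qed.

Lemma prof_prob_sum Q act m k : sumL (all_profiles m) (fun a => prof_prob Q act a k) = 1.
Proof.
  revert k; induction m; intros k; [unfold sumL; simpl; lra|].
  simpl. rewrite sumL_flat.
  rewrite (sumL_ext _ _ (fun a => 1 * prof_prob Q act a (S k))).
  - rewrite sumL_scal, IHm. lra.
  - intros a _. rewrite !prof_prob_cons. unfold fac. destruct (act k); lra.
Qed.

Lemma prof_prob_nonneg Q act a k : (forall j, 0 <= Q j <= 1) -> 0 <= prof_prob Q act a k.
Proof.
  intros HQ; revert k; induction a; intros k; simpl; [lra|].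
  apply Rmult_le_pos; auto. destruct (act k), a; specialize (HQ k); lra.
Qed.

Lemma prof_prob_ext Q1 Q2 act a k : (forall j, (k <= j)%nat -> Q1 j = Q2 j) ->
  prof_prob Q1 act a k = prof_prob Q2 act a k.
Proof.
  revert k; induction a; intros k H; simpl; auto.
  rewrite (IHa (S k)) by (intros; apply H; lia). rewrite H by lia. reflexivity.
Qed.

Definition Qx (Q : nat -> R) (i : nat) (x : R) : nat -> R := fun j => if Nat.eqb j i then x else Q j.

Lemma prof_prob_affine Q i x act a k :
  prof_prob (Qx Q i x) act a k = x * prof_prob (Qx Q i 1) act a k + (1 - x) * prof_prob (Qx Q i 0) act a k.
Proof.
  revert k; induction a as [|b a IH]; intros k; simpl; [lra|].
  destruct (Nat.eqb_spec k i) as [->|Hk].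
  - assert (E1: prof_prob (Qx Q i x) act a (S i) = prof_prob (Qx Q i 1) act a (S i))
      by (apply prof_prob_ext; intros j Hj; unfold Qx; destruct (Nat.eqb_spec j i); [lia|auto]).
    assert (E2: prof_prob (Qx Q i 0) act a (S i) = prof_prob (Qx Q i 1) act a (S i))
      by (apply prof_prob_ext; intros j Hj; unfold Qx; destruct (Nat.eqb_spec j i); [lia|auto]).
    rewrite E1, E2. unfold Qx. rewrite Nat.eqb_refl. destruct (act i), b; lra.
  - rewrite IH. unfold Qx. destruct (Nat.eqb_spec k i); [lia|]. lra.
Qed.

Lemma prof_prob_zero Q act i a k : (k <= i)%nat -> (i - k < length a)%nat ->
  fac Q act i (nth (i - k) a false) = 0 -> prof_prob Q act a k = 0.
Proof.
  revert k; induction a as [|b a IH]; intros k Hk Hl Hf; simpl in *; [lia|].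
  destruct (Nat.eq_dec k i) as [->|Hne].
  - rewrite Nat.sub_diag in Hf. simpl in Hf. unfold fac in Hf. rewrite Hf. lra.
  - rewrite (IH (S k)); [lra|lia|lia|]. replace (i - k)%nat with (S (i - S k)) in Hf by lia. exact Hf.
Qed.

Lemma prof_prob_map Q act f l k :
  prof_prob Q act (map f (seq k l)) k = fold_right Rmult 1 (map (fun m => fac Q act m (f m)) (seq k l)).
Proof. revert k; induction l; intros k; simpl; auto. rewrite IHl. reflexivity. Qed.

Lemma prod_zero (g : nat -> R) L j : In j L -> g j = 0 -> fold_right Rmult 1 (map g L) = 0.
Proof. induction L; simpl; intros H Hg; [contradiction|]. destruct H as [->|H].
  rewrite Hg; lra. rewrite IHL; auto; lra. Qed.

Lemma prod_nonneg (g : nat -> R) L : (forall m, In m L -> 0 <= g m) -> 0 <= fold_right Rmult 1 (map g L).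
Proof. induction L; simpl; intros H; [lra|]. apply Rmult_le_pos; auto. Qed.

Lemma prod_le1 (g : nat -> R) L : (forall m, In m L -> 0 <= g m <= 1) -> fold_right Rmult 1 (map g L) <= 1.
Proof. induction L; simpl; intros H; [lra|].
  assert (0 <= fold_right Rmult 1 (map g L)) by (apply prod_nonneg; intros; apply H; auto).
  assert (fold_right Rmult 1 (map g L) <= 1) by (apply IHL; auto).
  destruct (H a (or_introl eq_refl)).
  assert (g a * fold_right Rmult 1 (map g L) <= 1 * fold_right Rmult 1 (map g L)) by (apply Rmult_le_compat_r; lra).
  lra. Qed.

Lemma prod_ext (g1 g2 : nat -> R) L : (forall m, In m L -> g1 m = g2 m) ->
  fold_right Rmult 1 (map g1 L) = fold_right Rmult 1 (map g2 L).
Proof. intros H; f_equal; apply map_ext_in; auto. Qed.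

Lemma prod_compare (g h : nat -> R) (q : R) j L : NoDup L -> 0 <= q <= 1 ->
  (forall m, In m L -> m <> j -> g m = h m) -> (forall m, In m L -> 0 <= h m <= 1) ->
  (In j L -> g j = q) ->
  q * fold_right Rmult 1 (map h L) <= fold_right Rmult 1 (map g L).
Proof.
  induction L as [|m L IH]; simpl; intros ND Hq Heq Hh Hj; [lra|].
  inversion ND; subst.
  assert (P0: 0 <= fold_right Rmult 1 (map h L)) by (apply prod_nonneg; intros; apply Hh; auto).
  destruct (Nat.eq_dec m j) as [->|Hne].
  - rewrite Hj by auto. rewrite (prod_ext g h) by (intros x Hx; apply Heq; auto; intros ->; contradiction).
    destruct (Hh j (or_introl eq_refl)).
    assert (h j * fold_right Rmult 1 (map h L) <= 1 * fold_right Rmult 1 (map h L)) by (apply Rmult_le_compat_r; lra).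
    assert (q * (h j * fold_right Rmult 1 (map h L)) <= q * (1 * fold_right Rmult 1 (map h L))) by (apply Rmult_le_compat_l; lra).
    lra.
  - rewrite Heq by auto.
    assert (IH' : q * fold_right Rmult 1 (map h L) <= fold_right Rmult 1 (map g L)).
    { apply IH; auto. }
    destruct (Hh m (or_introl eq_refl)).
    assert (h m * (q * fold_right Rmult 1 (map h L)) <= h m * fold_right Rmult 1 (map g L)) by (apply Rmult_le_compat_l; lra).
    lra.
Qed.


Lemma util_0 rho : util rho 0 = 0.
Proof. unfold util. destruct (Req_EM_T rho 0); auto. rewrite Rmult_0_r, exp_0. field; auto. Qed.

Lemma util_cara rho w x : util rho (w + x) = util rho w + exp (- rho * w) * util rho x.
Proof. unfold util. destruct (Req_EM_T rho 0) as [->|H].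
  - rewrite Ropp_0, Rmult_0_l, exp_0. lra.
  - replace (- rho * (w + x)) with (- rho * w + - rho * x) by ring. rewrite exp_plus. field; auto. Qed.

Lemma util_lt rho x y : rho <= 0 -> x < y -> util rho x < util rho y.
Proof. intros Hr Hxy. unfold util. destruct (Req_EM_T rho 0) as [->|H]; auto.
  assert (Hr' : rho < 0) by lra.
  assert (exp (- rho * x) < exp (- rho * y)) by (apply exp_increasing; nra).
  apply (Rmult_lt_reg_r (- rho)); [lra|].
  replace ((1 - exp (- rho * x)) / rho * - rho) with (exp (- rho * x) - 1) by (field; auto).
  replace ((1 - exp (- rho * y)) / rho * - rho) with (exp (- rho * y) - 1) by (field; auto). lra. Qed.

Lemma util_le rho x y : rho <= 0 -> x <= y -> util rho x <= util rho y.
Proof. intros Hr [H|E]; [left; apply util_lt; auto| subst; lra]. Qed.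

Lemma util_pos rho x : rho <= 0 -> 0 < x -> 0 < util rho x.
Proof. intros. rewrite <- (util_0 rho). apply util_lt; auto. Qed.

Lemma ended_app h a : ended (h ++ [a]) = ended h || Nat.eqb (nbidders a) 1.
Proof. unfold ended. rewrite existsb_app. simpl. rewrite orb_false_r. reflexivity. Qed.

Lemma won_app i h a : won i (h ++ [a]) = won i h || (Nat.eqb (nbidders a) 1 && bids a i).
Proof. unfold won. rewrite existsb_app. simpl. rewrite orb_false_r. reflexivity. Qed.

Lemma won_ended i h : won i h = true -> ended h = true.
Proof. unfold won, ended. intros H. apply existsb_exists in H. destruct H as [x [Hx H]].
  apply existsb_exists. exists x. split; auto. apply andb_true_iff in H. tauto. Qed.

Lemma nonended_not_won i h : ended h = false -> won i h = false.
Proof. intros H. destruct (won i h) eqn:E; auto. apply won_ended in E. congruence. Qed.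

Lemma wealth_app c v s i h a : wealth c v s i (h ++ [a]) =
  wealth c v s i h - c * (if bids a i then 1 else 0)
  + ((if won i (h ++ [a]) then v - s else 0) - (if won i h then v - s else 0)).
Proof. unfold wealth. rewrite filter_app, length_app. simpl. rewrite plus_INR.
  destruct (bids a i); simpl; lra. Qed.

Lemma wealth_nobid c v s i h a : won i h = false -> bids a i = false ->
  wealth c v s i (h ++ [a]) = wealth c v s i h /\ won i (h ++ [a]) = false.
Proof. intros Hw Hb. rewrite wealth_app, won_app, Hw, Hb, andb_false_r. simpl. split; [lra|auto]. Qed.

Lemma wealth_bid c v s i h a : won i h = false -> bids a i = true ->
  wealth c v s i (h ++ [a]) = wealth c v s i h - c + (if Nat.eqb (nbidders a) 1 then v - s else 0)
  /\ won i (h ++ [a]) = Nat.eqb (nbidders a) 1.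
Proof. intros Hw Hb. rewrite wealth_app, won_app, Hw, Hb, andb_true_r. simpl. split; [|auto].
  destruct (Nat.eqb (nbidders a) 1); lra. Qed.

Lemma active_app n reentry h a i : active n reentry (h ++ [a]) i =
  Nat.ltb i n && active_step reentry (fold_left (active_step reentry) h (fun _ => true)) a i.
Proof. unfold active. rewrite fold_left_app. reflexivity. Qed.

Lemma active_lt n reentry h i : active n reentry h i = true -> (i < n)%nat.
Proof. unfold active. intros H. apply andb_true_iff in H. destruct H as [H _]. apply Nat.ltb_lt; auto. Qed.

Lemma fold_reentry h : fold_left (active_step true) h (fun _ => true) = (fun _ => true).
Proof. induction h as [|x h IH] using rev_ind; simpl; auto. rewrite fold_left_app. simpl. rewrite IH. reflexivity. Qed.

Lemma active_reentry n h i : active n true h i = Nat.ltb i n.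
Proof. unfold active. rewrite fold_reentry. apply andb_true_r. Qed.

Lemma inactive_child n reentry h a i : active n reentry h i = false -> bids a i = false ->
  active n reentry (h ++ [a]) i = false.
Proof. rewrite active_app. unfold active. intros H Hb.
  destruct (Nat.ltb i n); simpl in *; auto. unfold active_step.
  destruct reentry; auto. destruct (Nat.eqb (nbidders a) 0); auto. Qed.

Lemma bid_child_active n reentry h a i : active n reentry h i = true -> bids a i = true ->
  active n reentry (h ++ [a]) i = true.
Proof. rewrite active_app. unfold active. intros H Hb. apply andb_true_iff in H as [H1 H2].
  rewrite H1. simpl. unfold active_step. destruct reentry; auto.
  destruct (Nat.eqb (nbidders a) 0); auto. Qed.

Lemma nobid_nochange_active n reentry h a i : Nat.eqb (nbidders a) 0 = true ->
  active n reentry (h ++ [a]) i = active n reentry h i.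
Proof. intros H. rewrite active_app. unfold active, active_step. rewrite H. destruct reentry; auto. Qed.

Lemma nbidders_cons b a : nbidders (b :: a) = ((if b then 1 else 0) + nbidders a)%nat.
Proof. unfold nbidders. destruct b; reflexivity. Qed.

Lemma nbidders_zero a : (forall j, nth j a false = false) -> nbidders a = 0%nat.
Proof. induction a as [|b a IH]; intros H; auto. rewrite nbidders_cons.
  pose proof (H 0%nat) as H0. simpl in H0. subst. rewrite IH; auto. intros j. apply (H (S j)). Qed.

Lemma nbidders_le1 a i : (forall j, nth j a false = true -> j = i) -> (nbidders a <= 1)%nat.
Proof. revert i; induction a as [|b a IH]; intros i H; [unfold nbidders; simpl; lia|]. rewrite nbidders_cons.
  destruct b.
  - assert (i = 0%nat) by (apply eq_sym, (H 0%nat); reflexivity). subst.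
    rewrite nbidders_zero; [lia|]. intros j. destruct (nth j a false) eqn:E; auto.
    specialize (H (S j) E). discriminate.
  - destruct i as [|i].
    + rewrite nbidders_zero; [lia|]. intros j. destruct (nth j a false) eqn:E; auto.
      specialize (H (S j) E). discriminate.
    + specialize (IH i). assert (HH: (nbidders a <= 1)%nat); [|lia]. apply IH. intros j Hj.
      specialize (H (S j) Hj). lia.
Qed.

Lemma another_bidder a i : (2 <= nbidders a)%nat -> exists j, j <> i /\ nth j a false = true.
Proof. intros H. destruct (Classical_Prop.classic (exists j, j <> i /\ nth j a false = true)) as [E|E]; auto.
  exfalso. assert (nbidders a <= 1)%nat; [|lia]. apply (nbidders_le1 a i). intros j Hj.
  destruct (Nat.eq_dec j i); auto. exfalso. apply E. eauto. Qed.

Lemma nth_true_lt (a : profile) j : nth j a false = true -> (j < length a)%nat.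
Proof. intros H. destruct (Nat.lt_ge_cases j (length a)); auto. rewrite nth_overflow in H; auto. discriminate. Qed.

Lemma valid_app_inv n reentry h a : valid_history n reentry (h ++ [a]) ->
  valid_history n reentry h /\ ended h = false /\ length a = n /\ (forall i, bids a i = true -> active n reentry h i = true).
Proof. intros H. inversion H as [Hn|h' a' Hv He Hl Hb Heq].
  - destruct h; discriminate.
  - apply app_inj_tail in Heq. destruct Heq; subst. auto. Qed.

Lemma other_active n reentry h i : (2 <= n)%nat -> valid_history n reentry h -> ended h = false ->
  active n reentry h i = true -> exists j, j <> i /\ active n reentry h j = true.
Proof.
  intros Hn Hv. induction Hv as [|h a Hv IH He Hl Hb]; intros Hne Hi.
  - exists (if Nat.eqb i 0 then 1%nat else 0%nat). unfold active. simpl.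
    destruct (Nat.eqb_spec i 0); split; try lia; rewrite andb_true_r; apply Nat.ltb_lt; lia.
  - rewrite ended_app in Hne. apply orb_false_iff in Hne as [He1 Hne].
    destruct (Nat.eqb (nbidders a) 0) eqn:E0.
    + rewrite nobid_nochange_active in Hi by auto. destruct (IH He1 Hi) as [j [Hj1 Hj2]].
      exists j. rewrite nobid_nochange_active by auto. auto.
    + destruct reentry.
      * exists (if Nat.eqb i 0 then 1%nat else 0%nat). rewrite active_reentry.
        destruct (Nat.eqb_spec i 0); split; try lia; apply Nat.ltb_lt; lia.
      * apply Nat.eqb_neq in E0. apply Nat.eqb_neq in Hne.
        destruct (another_bidder a i) as [j [Hj1 Hj2]]; [lia|]. exists j. split; auto.
        rewrite active_app. unfold active_step. apply Nat.eqb_neq in E0. rewrite E0. simpl.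
        rewrite andb_true_iff. split; auto. apply Nat.ltb_lt. apply nth_true_lt in Hj2. lia.
Qed.


Lemma Un_cv_const (k : R) : Un_cv (fun _ => k) k.
Proof. intros eps He. exists 0%nat. intros. unfold Rdist. rewrite Rminus_diag, Rabs_R0. lra. Qed.

Lemma Un_cv_shift u l : Un_cv u l -> Un_cv (fun T => u (S T)) l.
Proof. intros H eps He. destruct (H eps He) as [N HN]. exists N. intros m Hm. apply HN. lia. Qed.

Lemma Un_cv_unshift u l : Un_cv (fun T => u (S T)) l -> Un_cv u l.
Proof. intros H eps He. destruct (H eps He) as [N HN]. exists (S N). intros m Hm.
  destruct m; [lia|]. apply HN. lia. Qed.

Lemma Un_cv_scal u l k : Un_cv u l -> Un_cv (fun T => k * u T) (k * l).
Proof. intros H. apply CV_mult; auto. apply Un_cv_const. Qed.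

Lemma Un_cv_sum L (w : profile -> R) (F : profile -> nat -> R) (l : profile -> R) :
  (forall a, In a L -> w a = 0 \/ Un_cv (F a) (l a)) ->
  Un_cv (fun T => sumL L (fun a => w a * F a T)) (sumL L (fun a => w a * l a)).
Proof.
  induction L as [|x L IH]; intros H.
  - unfold sumL; simpl. apply Un_cv_const.
  - unfold sumL in *; simpl. apply CV_plus.
    + destruct (H x (or_introl eq_refl)) as [E|E].
      * rewrite E. intros eps He. exists 0%nat. intros. unfold Rdist. rewrite !Rmult_0_l, Rminus_diag, Rabs_R0. lra.
      * apply Un_cv_scal; auto.
    + apply IH. intros; apply H; right; auto.
Qed.

Lemma lim_le_eps u l K : Un_cv u l -> (forall eps, eps > 0 -> exists N, forall T, (T >= N)%nat -> u T <= K + eps) -> l <= K.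
Proof.
  intros Hc H. destruct (Rle_or_lt l K) as [|Hlt]; auto. exfalso.
  set (e := (l - K) / 2). assert (He : e > 0) by (unfold e; lra).
  destruct (H e He) as [N1 H1]. destruct (Hc e He) as [N2 H2].
  specialize (H1 (max N1 N2) ltac:(lia)). specialize (H2 (max N1 N2) ltac:(lia)).
  unfold Rdist in H2. apply Rabs_def2 in H2. unfold e in *. lra.
Qed.

Lemma lim_le u l K : Un_cv u l -> (forall T, u T <= K) -> l <= K.
Proof. intros Hc H. apply (lim_le_eps u); auto. intros eps He. exists 0%nat. intros T _. specialize (H T). lra. Qed.

Lemma lim_ge u l K : Un_cv u l -> (forall T, K <= u T) -> K <= l.
Proof.
  intros Hc H. destruct (Rle_or_lt K l) as [|Hlt]; auto. exfalso.
  set (e := (K - l) / 2). assert (He : e > 0) by (unfold e; lra).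
  destruct (Hc e He) as [N2 H2]. specialize (H2 N2 ltac:(lia)). specialize (H N2).
  unfold Rdist in H2. apply Rabs_def2 in H2. unfold e in *. lra.
Qed.

Definition limv (u : nat -> R) : R :=
  match excluded_middle_informative (exists l, Un_cv u l) with
  | left H => proj1_sig (constructive_indefinite_description _ H)
  | right _ => 0
  end.

Lemma limv_spec u l : Un_cv u l -> limv u = l.
Proof. intros H. unfold limv. destruct (excluded_middle_informative _) as [E|E].
  - destruct (constructive_indefinite_description _ E) as [l' Hl']. simpl. eapply UL_sequence; eauto.
  - exfalso; apply E; eauto. Qed.

Section EUsec.
Variables (n : nat) (reentry : bool) (rho c v s : R).

Definition prob (sg : strategy_profile) (h : history) (a : profile) : R :=
  prof_prob (fun j => sg j h) (active n reentry h) a 0.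

Lemma EU_ended sg i h T : ended h = true -> EU n reentry rho c v s sg i h T = util rho (wealth c v s i h).
Proof. intros H. destruct T; simpl; auto. rewrite H. auto. Qed.

Lemma EU_step sg i h T : ended h = false -> EU n reentry rho c v s sg i h (S T) =
  sumL (all_profiles n) (fun a => prob sg h a * EU n reentry rho c v s sg i (h ++ [a]) T).
Proof. intros H. simpl. rewrite H. reflexivity. Qed.

Lemma EU_ext sg1 sg2 i T : forall h, (forall j e, sg1 j (h ++ e) = sg2 j (h ++ e)) ->
  EU n reentry rho c v s sg1 i h T = EU n reentry rho c v s sg2 i h T.
Proof.
  induction T; intros h H; simpl; auto. destruct (ended h); auto.
  f_equal. apply map_ext. intros a. f_equal.
  - apply prof_prob_ext. intros j _. specialize (H j nil). rewrite app_nil_r in H. auto.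
  - apply IHT. intros j e. rewrite <- app_assoc. apply H.
Qed.

Lemma sum_prob sg h : sumL (all_profiles n) (fun a => prob sg h a) = 1.
Proof. apply prof_prob_sum. Qed.

Lemma sum_prob_const sg h K : sumL (all_profiles n) (fun a => prob sg h a * K) = K.
Proof. rewrite (sumL_ext _ _ (fun a => K * prob sg h a)) by (intros; lra). rewrite sumL_scal, sum_prob. lra. Qed.

Lemma prob_nonneg sg h a : valid_profile sg -> 0 <= prob sg h a.
Proof. intros H. apply prof_prob_nonneg. intros j. apply H. Qed.

Lemma EU_const sg i (P : history -> Prop) :
  (forall h a, P h -> bids a i = true -> prob sg h a = 0) ->
  (forall h a, P h -> bids a i = false -> P (h ++ [a])) ->
  forall T h, won i h = false -> P h -> EU n reentry rho c v s sg i h T = util rho (wealth c v s i h).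
Proof.
  intros H1 H2. induction T; intros h Hw HP; [simpl; auto|].
  destruct (ended h) eqn:E; [rewrite EU_ended; auto|rewrite EU_step by auto].
  rewrite (sumL_ext _ _ (fun a => prob sg h a * util rho (wealth c v s i h))).
  - apply sum_prob_const.
  - intros a _. destruct (bids a i) eqn:B.
    + rewrite H1 by auto. lra.
    + destruct (wealth_nobid c v s i h a Hw B) as [W1 W2]. rewrite IHT; auto. rewrite W1; auto.
Qed.

Definition Bd i h := wealth c v s i h + (if won i h then 0 else v - s).

Lemma EU_upper sg i : valid_profile sg -> rho <= 0 -> 0 <= c -> 0 <= v - s ->
  forall T h, EU n reentry rho c v s sg i h T <= util rho (Bd i h).
Proof.
  intros Hv Hr Hc Hvs. induction T; intros h.
  - simpl. apply util_le; auto. unfold Bd. destruct (won i h); lra.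
  - destruct (ended h) eqn:E.
    + rewrite EU_ended by auto. apply util_le; auto. unfold Bd. destruct (won i h); lra.
    + rewrite EU_step by auto. rewrite <- (sum_prob_const sg h (util rho (Bd i h))).
      apply sumL_le. intros a _. apply Rmult_le_compat_l; [apply prob_nonneg; auto|].
      eapply Rle_trans; [apply IHT|]. apply util_le; auto.
      pose proof (nonended_not_won i h E) as Hw. unfold Bd. rewrite Hw.
      destruct (bids a i) eqn:B.
      * destruct (wealth_bid c v s i h a Hw B) as [W1 W2]. rewrite W1, W2.
        destruct (Nat.eqb (nbidders a) 1); lra.
      * destruct (wealth_nobid c v s i h a Hw B) as [W1 W2]. rewrite W1, W2. lra.
Qed.

End EUsec.


Definition onlyp (n j : nat) : profile := map (fun m => Nat.eqb m j) (seq 0 n).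

Lemma onlyp_length n j : length (onlyp n j) = n.
Proof. unfold onlyp. rewrite length_map, length_seq. auto. Qed.

Lemma onlyp_in n j : In (onlyp n j) (all_profiles n).
Proof. apply all_profiles_length, onlyp_length. Qed.

Lemma nth_onlyp n j m : nth m (onlyp n j) false = (Nat.ltb m n && Nat.eqb m j).
Proof. unfold onlyp. destruct (Nat.ltb_spec m n).
  - rewrite (nth_indep _ false ((fun m => Nat.eqb m j) 0%nat)) by (rewrite length_map, length_seq; auto).
    rewrite (map_nth (fun m => Nat.eqb m j) (seq 0 n) 0%nat m). rewrite seq_nth by auto. simpl. auto.
  - rewrite nth_overflow; auto. rewrite length_map, length_seq; auto. Qed.

Lemma nbidders_ge1 a i : nth i a false = true -> (1 <= nbidders a)%nat.
Proof. revert i; induction a as [|b a IH]; intros i H; [destruct i; discriminate|]. rewrite nbidders_cons.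
  destruct i; simpl in H. subst. lia. specialize (IH i H). destruct b; lia. Qed.

Lemma nbidders_ge2 a i j : i <> j -> nth i a false = true -> nth j a false = true -> (2 <= nbidders a)%nat.
Proof. revert i j; induction a as [|b a IH]; intros i j Hij Hi Hj; [destruct i; discriminate|]. rewrite nbidders_cons.
  destruct i, j; simpl in *; try lia.
  - subst. pose proof (nbidders_ge1 a j Hj). lia.
  - subst. pose proof (nbidders_ge1 a i Hi). lia.
  - specialize (IH i j ltac:(lia) Hi Hj). destruct b; lia. Qed.

Lemma nbidders_onlyp n j : (j < n)%nat -> nbidders (onlyp n j) = 1%nat.
Proof. intros H. assert (H1 : (1 <= nbidders (onlyp n j))%nat).
  { apply (nbidders_ge1 _ j). rewrite nth_onlyp. rewrite Nat.eqb_refl, andb_true_r. apply Nat.ltb_lt; auto. }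
  assert (H2 : (nbidders (onlyp n j) <= 1)%nat).
  { apply (nbidders_le1 _ j). intros m. rewrite nth_onlyp. intros E. apply andb_true_iff in E as [_ E].
    apply Nat.eqb_eq; auto. }
  lia. Qed.

Lemma single_bidder_eq n a i : length a = n -> bids a i = true -> nbidders a = 1%nat -> a = onlyp n i.
Proof. intros Hl Hb Hnb. unfold bids in Hb. apply nth_ext with (d := false) (d' := false).
  - rewrite onlyp_length; auto.
  - intros m Hm. rewrite nth_onlyp. rewrite Hl in Hm. apply Nat.ltb_lt in Hm as Hm'. rewrite Hm'. simpl.
    destruct (Nat.eqb_spec m i) as [->|Hne]; auto.
    destruct (nth m a false) eqn:E; auto. pose proof (nbidders_ge2 a i m ltac:(auto) Hb E). lia. Qed.

Lemma sum_point m (b : profile) (f : profile -> R) : length b = m ->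
  sumL (all_profiles m) (fun a => if list_eq_dec bool_dec a b then f a else 0) = f b.
Proof.
  revert b f; induction m; intros b f Hb.
  - destruct b; [|discriminate]. unfold sumL; simpl. destruct (list_eq_dec bool_dec [] []); [lra|contradiction].
  - destruct b as [|x b]; [discriminate|]. simpl in Hb. simpl. rewrite sumL_flat.
    rewrite (sumL_ext _ _ (fun a => if list_eq_dec bool_dec a b then f (x :: a) else 0)).
    + apply (IHm b (fun a => f (x :: a))). lia.
    + intros a _. destruct (list_eq_dec bool_dec a b) as [->|Hne].
      * destruct x; destruct (list_eq_dec bool_dec (true :: b) (true :: b)); destruct (list_eq_dec bool_dec (false :: b) (true :: b));
        destruct (list_eq_dec bool_dec (false :: b) (false :: b)); destruct (list_eq_dec bool_dec (true :: b) (false :: b));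
        try congruence; lra.
      * destruct (list_eq_dec bool_dec (true :: a) (x :: b)) as [E|]; [inversion E; congruence|].
        destruct (list_eq_dec bool_dec (false :: a) (x :: b)) as [E|]; [inversion E; congruence|]. lra.
Qed.

Lemma prod_le_factor (g : nat -> R) L j : In j L -> (forall m, In m L -> 0 <= g m <= 1) ->
  fold_right Rmult 1 (map g L) <= g j.
Proof. revert j; induction L as [|m L IH]; simpl; intros j Hj H; [contradiction|].
  assert (P0 : 0 <= fold_right Rmult 1 (map g L)) by (apply prod_nonneg; intros; apply H; auto).
  assert (P1 : fold_right Rmult 1 (map g L) <= 1) by (apply prod_le1; intros; apply H; auto).
  destruct (H m (or_introl eq_refl)) as [Hm1 Hm2].
  destruct Hj as [<-|Hj].
  - assert (g m * fold_right Rmult 1 (map g L) <= g m * 1) by (apply Rmult_le_compat_l; lra). lra.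
  - specialize (IH j Hj (fun x hx => H x (or_intror hx))).
    assert (g m * fold_right Rmult 1 (map g L) <= 1 * fold_right Rmult 1 (map g L)) by (apply Rmult_le_compat_r; lra). lra.
Qed.

Lemma prod_one (g : nat -> R) L : (forall m, In m L -> g m = 1) -> fold_right Rmult 1 (map g L) = 1.
Proof. induction L; simpl; intros H; auto. rewrite H, IHL; auto. lra. Qed.


Lemma local_num (q s SDn delta R0 p M g : R) :
  0 <= q <= 1 -> 0 <= s <= 1 -> 0 <= delta -> 0 < R0 -> 0 < M -> 0 < g -> 0 <= p -> p <= 1 - q ->
  (q < 1 -> R0 - delta = R0 * s - SDn) ->
  (0 < q -> R0 - delta <= p * M + (1 - p) * (R0 - g)) ->
  q * p <= 1 - s ->
  (q = 1 -> p = 0) ->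
  let p0 := g / (2 * (M + g)) in
  let K := 2 * (2 / g + 1 / R0 + 1 / (p0 * p0 * R0)) in
  1 - (1 - q) * s + K * ((1 - q) * SDn) <= K * delta.
Proof.
  intros Hq Hs Hd HR HM Hg Hp0 Hp1 H1 H2 H3 H4 p0 K.
  set (K0 := 2 / g + 1 / R0 + 1 / (p0 * p0 * R0)).
  assert (EK : K = 2 * K0) by reflexivity. clearbody K. subst K. rename K0 into K.
  assert (Hp0pos : 0 < p0) by (unfold p0; apply Rdiv_lt_0_compat; lra).
  assert (HK1 : K * R0 >= 1).
  { unfold K. assert (0 < 2 / g) by (apply Rdiv_lt_0_compat; lra).
    assert (0 < 1 / (p0 * p0 * R0)) by (apply Rdiv_lt_0_compat; [lra| apply Rmult_lt_0_compat; [nra|lra]]).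
    assert (1 / R0 * R0 = 1) by (field; lra). nra. }
  assert (HKg : K * g >= 2).
  { unfold K. assert (0 < 1 / R0) by (apply Rdiv_lt_0_compat; lra).
    assert (0 < 1 / (p0 * p0 * R0)) by (apply Rdiv_lt_0_compat; [lra| apply Rmult_lt_0_compat; [nra|lra]]).
    assert (2 / g * g = 2) by (field; lra). nra. }
  assert (HKp : K * (p0 * p0 * R0) >= 1).
  { unfold K. assert (0 < 2 / g) by (apply Rdiv_lt_0_compat; lra).
    assert (0 < 1 / R0) by (apply Rdiv_lt_0_compat; lra).
    assert (1 / (p0 * p0 * R0) * (p0 * p0 * R0) = 1) by (field; split; lra).
    assert (0 < p0 * p0 * R0) by (apply Rmult_lt_0_compat; [nra|lra]). nra. }
  assert (HK0 : 0 < K) by nra.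
  destruct (Req_dec q 1) as [Eq1|Nq1].
  - subst q. rewrite H4 in H2 by auto. specialize (H2 ltac:(lra)).
    assert (delta >= g) by lra. nra.
  - assert (Hq1 : q < 1) by lra. specialize (H1 Hq1).
    assert (ESD : SDn = delta - (1 - s) * R0) by lra. rewrite ESD.
    (* need q + (1-q)(1-s) <= K (q delta + (1-q)(1-s) R0) *)
    assert (A1 : (1 - q) * (1 - s) <= K * ((1 - q) * (1 - s) * R0)).
    { assert (0 <= (1 - q) * (1 - s)) by nra. nra. }
    assert (A2 : q <= K * (q * delta + (1 - q) * (1 - s) * R0)).
    { assert (0 <= (1 - q) * (1 - s) * R0) by (apply Rmult_le_pos; nra).
      destruct (Req_dec q 0) as [->|Nq0].
      - nra.
      - assert (Hqp : 0 < q) by lra.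
        destruct (Rle_or_lt (g / 2) delta) as [Hdg|Hdg].
        + assert (q * delta >= q * (g / 2)) by nra.
          assert (K * (q * (g / 2)) >= q) by nra. nra.
        + specialize (H2 Hqp).
          assert (Hpm : p * (M - R0 + g) >= g / 2) by nra.
          assert (Hpp : p >= p0).
          { unfold p0. destruct (Rle_or_lt (M - R0 + g) 0) as [Hn|Hn].
            - assert (p * (M - R0 + g) <= 0) by nra. lra.
            - apply Rle_ge. unfold Rdiv. apply (Rmult_le_reg_r (2 * (M + g))); [lra|].
              rewrite Rmult_assoc, Rinv_l, Rmult_1_r by lra. nra. }
          assert (E1 : 1 - q >= p0) by lra.
          assert (E2 : 1 - s >= q * p0) by nra.
          assert (E3 : (1 - q) * (1 - s) >= p0 * (q * p0)) by nra.
          assert (E4 : (1 - q) * (1 - s) * R0 >= q * (p0 * p0 * R0)) by nra.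
          assert (K * ((1 - q) * (1 - s) * R0) >= q) by nra.
          assert (0 <= q * delta) by nra. nra. }
    assert (0 <= q * delta) by nra.
    assert (0 <= (1 - q) * (1 - s) * R0) by (apply Rmult_le_pos; nra).
    nra.
Qed.


Section Eq.
Variables (n : nat) (reentry : bool) (rho c v s : R) (sigma : strategy_profile).
Hypothesis Hn : (2 <= n)%nat.
Hypothesis Hc : 0 < c.
Hypothesis Hcvs : c < v - s.
Hypothesis Hr : rho <= 0.
Hypothesis Hspe : is_SPE n reentry rho c v s sigma.
Hypothesis Hsym : symmetric n reentry sigma.

Definition EUs i h := EU n reentry rho c v s sigma i h.
Definition Vn i h := limv (EUs i h).
Definition act h := active n reentry h.
Definition Pr h a := prob n reentry sigma h a.
Definition Qd h i x := Qx (fun j => sigma j h) i x.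
Definition PQ h i x a := prof_prob (Qd h i x) (act h) a 0.

Lemma Vn_eq i h l : Un_cv (EUs i h) l -> Vn i h = l.
Proof. intros H. unfold Vn. apply limv_spec. exact H. Qed.

Lemma Hvp : valid_profile sigma.
Proof. destruct Hspe; auto. Qed.

Lemma conv_ended i h : ended h = true -> Un_cv (EUs i h) (Vn i h).
Proof. intros E. assert (H : Un_cv (EUs i h) (util rho (wealth c v s i h))).
  { intros eps He. exists 0%nat. intros T _. unfold EUs. rewrite EU_ended by auto.
    unfold Rdist. rewrite Rminus_diag, Rabs_R0. lra. }
  rewrite (Vn_eq i h _ H). auto. Qed.

Lemma conv_node i h : valid_history n reentry h -> ended h = false -> (i < n)%nat -> Un_cv (EUs i h) (Vn i h).
Proof. intros Hv He Hi. destruct Hspe as [_ H]. destruct (H h Hv He i Hi) as [V [HV _]].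
  rewrite (Vn_eq i h _ HV). auto. Qed.

Lemma conv_valid i h : valid_history n reentry h -> (i < n)%nat -> Un_cv (EUs i h) (Vn i h).
Proof. intros Hv Hi. destruct (ended h) eqn:E; [apply conv_ended|apply conv_node]; auto. Qed.

Lemma bidders_active Q h a : (prof_prob Q (act h) a 0 <> 0) -> forall j, bids a j = true -> act h j = true.
Proof. intros H j Hb. destruct (act h j) eqn:E; auto. exfalso. apply H.
  apply (prof_prob_zero Q (act h) j a 0); [lia| |].
  - rewrite Nat.sub_0_r. apply nth_true_lt. exact Hb.
  - rewrite Nat.sub_0_r. unfold bids in Hb. rewrite Hb. unfold fac. rewrite E. auto. Qed.

Lemma child_valid Q h a : valid_history n reentry h -> ended h = false -> In a (all_profiles n) ->
  prof_prob Q (act h) a 0 <> 0 -> valid_history n reentry (h ++ [a]).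
Proof. intros Hv He Ha HP. constructor; auto. apply all_profiles_length; auto.
  apply (bidders_active Q); auto. Qed.

Lemma child_conv Q i h a : valid_history n reentry h -> ended h = false -> (i < n)%nat -> In a (all_profiles n) ->
  prof_prob Q (act h) a 0 = 0 \/ Un_cv (EUs i (h ++ [a])) (Vn i (h ++ [a])).
Proof. intros. destruct (Req_dec (prof_prob Q (act h) a 0) 0); auto. right.
  apply conv_valid; auto. eapply child_valid; eauto. Qed.

Lemma decomp i h : valid_history n reentry h -> ended h = false -> (i < n)%nat ->
  Vn i h = sumL (all_profiles n) (fun a => Pr h a * Vn i (h ++ [a])).
Proof.
  intros Hv He Hi. pose proof (conv_node i h Hv He Hi) as H. apply Un_cv_shift in H.
  assert (H2 : Un_cv (fun T => sumL (all_profiles n) (fun a => Pr h a * EUs i (h ++ [a]) T))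
                     (sumL (all_profiles n) (fun a => Pr h a * Vn i (h ++ [a])))).
  { apply Un_cv_sum. intros a Ha. apply (child_conv (fun j => sigma j h)); auto. }
  eapply UL_sequence; [exact H|]. intros eps Heps. destruct (H2 eps Heps) as [N HN]. exists N. intros m Hm.
  specialize (HN m Hm). unfold EUs in *. rewrite EU_step by auto. exact HN.
Qed.

Definition devtau i h x : history -> R := fun h' => if list_eq_dec (list_eq_dec bool_dec) h' h then x else sigma i h'.

Lemma dev_step i h x T : ended h = false ->
  EU n reentry rho c v s (deviate sigma i (devtau i h x)) i h (S T) =
  sumL (all_profiles n) (fun a => PQ h i x a * EUs i (h ++ [a]) T).
Proof.
  intros He. rewrite EU_step by auto. apply sumL_ext. intros a _. f_equal.
  - unfold prob, PQ. apply prof_prob_ext. intros j _. unfold deviate, Qd, Qx, devtau.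
    destruct (Nat.eqb j i); auto. destruct (list_eq_dec (list_eq_dec bool_dec) h h); auto. contradiction.
  - unfold EUs. apply EU_ext. intros j e. unfold deviate, devtau.
    destruct (Nat.eqb_spec j i); auto. subst. destruct (list_eq_dec (list_eq_dec bool_dec) _ h) as [E|]; auto.
    exfalso. assert (E2 : h ++ ([a] ++ e) = h ++ []) by (rewrite app_nil_r, app_assoc; exact E). apply app_inv_head in E2. discriminate.
Qed.

Lemma dev_bound i h x : valid_history n reentry h -> ended h = false -> (i < n)%nat -> 0 <= x <= 1 ->
  sumL (all_profiles n) (fun a => PQ h i x a * Vn i (h ++ [a])) <= Vn i h.
Proof.
  intros Hv He Hi Hx. destruct Hspe as [_ H]. destruct (H h Hv He i Hi) as [V [HV Hdev]].
  assert (EV : Vn i h = V) by (apply Vn_eq; auto). rewrite EV.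
  assert (Htau : forall h', 0 <= devtau i h x h' <= 1).
  { intros h'. unfold devtau. destruct (list_eq_dec (list_eq_dec bool_dec) _ _); auto. apply Hvp. }
  specialize (Hdev (devtau i h x) Htau).
  assert (H2 : Un_cv (fun T => sumL (all_profiles n) (fun a => PQ h i x a * EUs i (h ++ [a]) T))
                     (sumL (all_profiles n) (fun a => PQ h i x a * Vn i (h ++ [a])))).
  { apply Un_cv_sum. intros a Ha. apply (child_conv (Qd h i x)); auto. }
  apply (lim_le_eps _ _ V H2). intros eps Heps. destruct (Hdev eps Heps) as [N HN].
  exists N. intros T HT. rewrite <- dev_step by auto. apply HN. lia.
Qed.

Lemma never_bid i h : valid_history n reentry h -> ended h = false -> (i < n)%nat ->
  util rho (wealth c v s i h) <= Vn i h.
Proof.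
  intros Hv He Hi. destruct Hspe as [_ H]. destruct (H h Hv He i Hi) as [V [HV Hdev]].
  assert (EV : Vn i h = V) by (apply Vn_eq; auto). rewrite EV.
  specialize (Hdev (fun _ => 0) ltac:(intros; lra)).
  assert (Hc0 : forall T, EU n reentry rho c v s (deviate sigma i (fun _ => 0)) i h T = util rho (wealth c v s i h)).
  { intros T. apply (EU_const n reentry rho c v s _ i (fun _ => True)); auto.
    - intros h' a _ Hb. unfold prob. apply (prof_prob_zero _ _ i a 0); [lia| |].
      + rewrite Nat.sub_0_r. apply nth_true_lt. exact Hb.
      + rewrite Nat.sub_0_r. unfold bids in Hb. rewrite Hb. unfold fac, deviate. rewrite Nat.eqb_refl.
        destruct (active n reentry h' i); auto.
    - apply nonended_not_won; auto. }
  destruct (Rle_or_lt (util rho (wealth c v s i h)) V) as [|Hlt]; auto. exfalso.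
  destruct (Hdev ((util rho (wealth c v s i h) - V) / 2) ltac:(lra)) as [N HN].
  specialize (HN N ltac:(lia)). rewrite Hc0 in HN. lra.
Qed.

Lemma value_upper i h : valid_history n reentry h -> ended h = false -> (i < n)%nat ->
  Vn i h <= util rho (wealth c v s i h + (v - s)).
Proof.
  intros Hv He Hi. apply (lim_le (EUs i h)); [apply conv_node; auto|]. intros T. unfold EUs.
  eapply Rle_trans; [apply (EU_upper n reentry rho c v s sigma i Hvp Hr); lra|].
  unfold Bd. rewrite nonended_not_won by auto. lra.
Qed.

Definition rent i h := (Vn i h - util rho (wealth c v s i h)) * exp (rho * wealth c v s i h).

Lemma Vn_rent i h : Vn i h = util rho (wealth c v s i h) + exp (- rho * wealth c v s i h) * rent i h.
Proof. unfold rent. set (w := wealth c v s i h).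
  replace (exp (- rho * w) * ((Vn i h - util rho w) * exp (rho * w))) with ((Vn i h - util rho w) * (exp (- rho * w) * exp (rho * w))) by ring.
  rewrite <- exp_plus. replace (- rho * w + rho * w) with 0 by ring. rewrite exp_0. ring. Qed.

Lemma rent_nonneg i h : valid_history n reentry h -> ended h = false -> (i < n)%nat -> 0 <= rent i h.
Proof. intros. unfold rent. apply Rmult_le_pos; [|left; apply exp_pos].
  pose proof (never_bid i h H H0 H1); lra. Qed.

Lemma rent_upper i h : valid_history n reentry h -> ended h = false -> (i < n)%nat -> rent i h <= util rho (v - s).
Proof. intros. pose proof (value_upper i h H H0 H1) as U. rewrite util_cara in U. rewrite Vn_rent in U.
  assert (exp (- rho * wealth c v s i h) * rent i h <= exp (- rho * wealth c v s i h) * util rho (v - s)) by lra.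
  apply Rmult_le_reg_l in H2; auto. apply exp_pos. Qed.


Lemma act_lt h i : act h i = true -> (i < n)%nat.
Proof. unfold act. apply active_lt. Qed.

Definition node i h := valid_history n reentry h /\ ended h = false /\ act h i = true.

Lemma node_lt i h : node i h -> (i < n)%nat.
Proof. intros [_ [_ H]]. apply (act_lt h i H). Qed.

Lemma Pr_affine i h a : Pr h a = sigma i h * PQ h i 1 a + (1 - sigma i h) * PQ h i 0 a.
Proof. unfold Pr, prob, PQ, Qd. rewrite <- prof_prob_affine. apply prof_prob_ext. intros j _.
  unfold Qx. destruct (Nat.eqb_spec j i); subst; auto. Qed.

Lemma PQ1_nobid i h a : act h i = true -> (i < length a)%nat -> bids a i = false -> PQ h i 1 a = 0.
Proof. intros Ha Hl Hb. unfold PQ. apply (prof_prob_zero _ _ i a 0); [lia|rewrite Nat.sub_0_r; auto|].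
  rewrite Nat.sub_0_r. unfold bids in Hb. rewrite Hb. unfold fac. rewrite Ha.
  unfold Qd, Qx. rewrite Nat.eqb_refl. lra. Qed.

Lemma PQ0_bid i h a : bids a i = true -> PQ h i 0 a = 0.
Proof. intros Hb. unfold PQ. apply (prof_prob_zero _ _ i a 0); [lia| |].
  - rewrite Nat.sub_0_r. apply nth_true_lt. exact Hb.
  - rewrite Nat.sub_0_r. unfold bids in Hb. rewrite Hb. unfold fac, Qd, Qx. rewrite Nat.eqb_refl.
    destruct (act h i); auto. Qed.

Lemma PQ_sum h i x : sumL (all_profiles n) (PQ h i x) = 1.
Proof. apply prof_prob_sum. Qed.

Lemma PQ_nonneg h i x a : 0 <= x <= 1 -> 0 <= PQ h i x a.
Proof. intros Hx. apply prof_prob_nonneg. intros j. unfold Qd, Qx. destruct (Nat.eqb j i); auto. apply Hvp. Qed.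

Definition Bid i h := sumL (all_profiles n) (fun a => PQ h i 1 a * Vn i (h ++ [a])).
Definition NoBid i h := sumL (all_profiles n) (fun a => PQ h i 0 a * Vn i (h ++ [a])).

Lemma split_BN i h : node i h -> Vn i h = sigma i h * Bid i h + (1 - sigma i h) * NoBid i h.
Proof. intros [Hv [He Ha]]. rewrite decomp; auto; [|apply (act_lt h i Ha)].
  unfold Bid, NoBid. rewrite <- !sumL_scal, <- sumL_plus. apply sumL_ext. intros a _.
  rewrite (Pr_affine i). ring. Qed.

Lemma Bid_le i h : node i h -> Bid i h <= Vn i h.
Proof. intros [Hv [He Ha]]. apply dev_bound; auto. apply (act_lt h i Ha). lra. Qed.

Lemma NoBid_le i h : node i h -> NoBid i h <= Vn i h.
Proof. intros [Hv [He Ha]]. apply dev_bound; auto. apply (act_lt h i Ha). lra. Qed.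

Lemma Bid_eq i h : node i h -> 0 < sigma i h -> Vn i h = Bid i h.
Proof. intros Hn' Hq. pose proof (split_BN i h Hn'). pose proof (Bid_le i h Hn'). pose proof (NoBid_le i h Hn').
  pose proof (Hvp i h). destruct (Rle_lt_or_eq_dec _ _ H0) as [Hl|]; auto. exfalso. nra. Qed.

Lemma NoBid_eq i h : node i h -> sigma i h < 1 -> Vn i h = NoBid i h.
Proof. intros Hn' Hq. pose proof (split_BN i h Hn'). pose proof (Bid_le i h Hn'). pose proof (NoBid_le i h Hn').
  pose proof (Hvp i h). destruct (Rle_lt_or_eq_dec _ _ H1) as [Hl|]; auto. exfalso. nra. Qed.

Lemma Vn_ended i h : ended h = true -> Vn i h = util rho (wealth c v s i h).
Proof. intros E. apply Vn_eq. intros eps He. exists 0%nat. intros T _. unfold EUs. rewrite EU_ended by auto.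
  unfold Rdist. rewrite Rminus_diag, Rabs_R0. lra. Qed.

Definition stay i h a := negb (bids a i) && negb (ended (h ++ [a])) && act (h ++ [a]) i.

Lemma exit_EU i h a m : node i h -> bids a i = false -> stay i h a = false ->
  EUs i (h ++ [a]) m = util rho (wealth c v s i h).
Proof.
  intros [Hv [He Ha]] Hb Hs. pose proof (nonended_not_won i h He) as Hw.
  destruct (wealth_nobid c v s i h a Hw Hb) as [W1 W2]. rewrite <- W1.
  unfold stay in Hs. rewrite Hb in Hs. simpl in Hs.
  destruct (ended (h ++ [a])) eqn:E.
  - unfold EUs. apply EU_ended; auto.
  - simpl in Hs. unfold EUs. apply (EU_const n reentry rho c v s sigma i (fun h' => act h' i = false)); auto.
    + intros h' a' H' Hb'. unfold prob. apply (prof_prob_zero _ _ i a' 0); [lia| |].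
      * rewrite Nat.sub_0_r. apply nth_true_lt. exact Hb'.
      * rewrite Nat.sub_0_r. unfold bids in Hb'. rewrite Hb'. unfold fac. cbv beta in H'. unfold act in H'. rewrite H'. auto.
    + intros h' a' H' Hb'. cbv beta in *. unfold act in *. apply inactive_child; auto.
Qed.

Lemma exit_Vn i h a : node i h -> bids a i = false -> stay i h a = false ->
  Vn i (h ++ [a]) = util rho (wealth c v s i h).
Proof. intros. apply Vn_eq. intros eps He. exists 0%nat. intros T _. rewrite exit_EU by auto.
  unfold Rdist. rewrite Rminus_diag, Rabs_R0. lra. Qed.

Lemma stay_node i h a Q : node i h -> stay i h a = true -> In a (all_profiles n) ->
  prof_prob Q (act h) a 0 <> 0 -> node i (h ++ [a]) /\ wealth c v s i (h ++ [a]) = wealth c v s i h.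
Proof.
  intros [Hv [He Ha]] Hs Hin HP. unfold stay in Hs. apply andb_true_iff in Hs as [Hs H3].
  apply andb_true_iff in Hs as [H1 H2]. apply negb_true_iff in H1, H2.
  split; [split; [eapply child_valid; eauto| split; auto]|].
  apply (wealth_nobid c v s i h a); auto. apply nonended_not_won; auto. Qed.

Lemma stay_wealth i h a : node i h -> stay i h a = true -> wealth c v s i (h ++ [a]) = wealth c v s i h.
Proof. intros [Hv [He Ha]] Hs. unfold stay in Hs. apply andb_true_iff in Hs as [Hs H3].
  apply andb_true_iff in Hs as [H1 H2]. apply negb_true_iff in H1.
  apply (wealth_nobid c v s i h a); auto. apply nonended_not_won; auto. Qed.

Lemma bid_node i h a Q : node i h -> bids a i = true -> Nat.eqb (nbidders a) 1 = false -> In a (all_profiles n) ->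
  prof_prob Q (act h) a 0 <> 0 -> node i (h ++ [a]) /\ wealth c v s i (h ++ [a]) = wealth c v s i h - c.
Proof.
  intros [Hv [He Ha]] Hb Hnb Hin HP. split; [split; [eapply child_valid; eauto|split]|].
  - rewrite ended_app, He, Hnb. auto.
  - unfold act in *. apply bid_child_active; auto.
  - destruct (wealth_bid c v s i h a (nonended_not_won i h He) Hb) as [W1 _]. rewrite W1, Hnb. lra.
Qed.

Lemma PQ1_onlyp i h : act h i = true -> (i < n)%nat -> PQ h i 1 (onlyp n i) = win_prob_if_bid n reentry sigma h i.
Proof.
  intros Ha Hi. unfold PQ, onlyp. rewrite prof_prob_map. unfold win_prob_if_bid. apply prod_ext.
  intros m Hm. unfold fac, Qd, Qx, act in *. destruct (Nat.eqb_spec m i) as [->|Hne].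
  - rewrite Ha. simpl. auto.
  - destruct (active n reentry h m); simpl; auto.
Qed.

Lemma PQ1_decomp i h (f : profile -> R) a : act h i = true -> (i < n)%nat -> In a (all_profiles n) ->
  PQ h i 1 a * f a = (if list_eq_dec bool_dec a (onlyp n i) then PQ h i 1 a * f (onlyp n i) else 0)
     + PQ h i 1 a * (if bids a i && negb (Nat.eqb (nbidders a) 1) then f a else 0).
Proof.
  intros Ha Hi Hin. apply all_profiles_length in Hin.
  destruct (bids a i) eqn:Hb.
  - destruct (Nat.eqb_spec (nbidders a) 1) as [E1|E1]; simpl.
    + pose proof (single_bidder_eq n a i Hin Hb E1) as ->. destruct (list_eq_dec _ _ _); [|contradiction]. lra.
    + destruct (list_eq_dec _ _ _) as [->|]; [|lra]. rewrite nbidders_onlyp in E1 by auto. lia.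
  - rewrite PQ1_nobid by (auto; lia). destruct (list_eq_dec _ _ _); lra.
Qed.

Lemma Bid_split i h (f : profile -> R) : act h i = true -> (i < n)%nat ->
  sumL (all_profiles n) (fun a => PQ h i 1 a * f a) =
  win_prob_if_bid n reentry sigma h i * f (onlyp n i)
  + sumL (all_profiles n) (fun a => PQ h i 1 a * (if bids a i && negb (Nat.eqb (nbidders a) 1) then f a else 0)).
Proof.
  intros Ha Hi. rewrite (sumL_ext _ _ (fun a => (if list_eq_dec bool_dec a (onlyp n i) then PQ h i 1 a * f (onlyp n i) else 0)
     + PQ h i 1 a * (if bids a i && negb (Nat.eqb (nbidders a) 1) then f a else 0))) by (intros; apply PQ1_decomp; auto).
  rewrite sumL_plus. f_equal. rewrite (sum_point n (onlyp n i) (fun a => PQ h i 1 a * f (onlyp n i))) by apply onlyp_length.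
  rewrite PQ1_onlyp; auto.
Qed.

Lemma wp_range i h : 0 <= win_prob_if_bid n reentry sigma h i <= 1.
Proof. unfold win_prob_if_bid. split; [apply prod_nonneg|apply prod_le1]; intros m _;
  destruct (active n reentry h m && negb (Nat.eqb m i)); pose proof (Hvp m h); lra. Qed.

Definition Mc := util rho (v - s - c).
Definition gc := - util rho (- c).

Lemma Mc_pos : 0 < Mc.
Proof. unfold Mc. apply util_pos; auto. lra. Qed.

Lemma gc_pos : 0 < gc.
Proof. unfold gc. assert (util rho (-c) < util rho 0) by (apply util_lt; auto; lra). rewrite util_0 in H. lra. Qed.

Definition Kc R0 := 2 * (2 / gc + 1 / R0 + 1 / ((gc / (2 * (Mc + gc))) * (gc / (2 * (Mc + gc))) * R0)).

Section Tree.
Variables (R0 : R) (i : nat) (w0 : R).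
Hypothesis HR0 : 0 < R0.
Hypothesis HRb : forall j h, node j h -> rent j h <= R0.

Definition delta h := R0 - rent i h.
Definition W h a := if stay i h a then Pr h a else 0.
Definition nodew h := node i h /\ wealth c v s i h = w0.
Definition E0 := exp (- rho * w0).

Fixpoint PT T h := match T with O => 1 | S T' => sumL (all_profiles n) (fun a => W h a * PT T' (h ++ [a])) end.
Fixpoint DT T h := match T with O => delta h | S T' => sumL (all_profiles n) (fun a => W h a * DT T' (h ++ [a])) end.
Fixpoint AT T h := match T with O => Vn i h - util rho w0 | S T' => sumL (all_profiles n) (fun a => W h a * AT T' (h ++ [a])) end.
Fixpoint XT T m h := match T with O => EUs i h m - util rho w0 | S T' => sumL (all_profiles n) (fun a => W h a * XT T' m (h ++ [a])) end.

Lemma W_nonneg h a : 0 <= W h a.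
Proof. unfold W. destruct (stay i h a); [apply prob_nonneg, Hvp|lra]. Qed.

Lemma W_child h a : nodew h -> In a (all_profiles n) -> W h a <> 0 -> nodew (h ++ [a]).
Proof. intros [Hn' Hw] Hin HW. unfold W in HW. destruct (stay i h a) eqn:S; [|contradiction].
  destruct (stay_node i h a (fun j => sigma j h) Hn' S Hin HW) as [A B]. split; auto. congruence. Qed.

Lemma W_le h a : W h a <= Pr h a.
Proof. unfold W. destruct (stay i h a). lra. apply prob_nonneg, Hvp. Qed.

Lemma W_sum_le h : sumL (all_profiles n) (W h) <= 1.
Proof. rewrite <- (sum_prob n reentry sigma h). apply sumL_le. intros; apply W_le. Qed.

Lemma sum_W_le h (F G : profile -> R) : nodew h ->
  (forall a, In a (all_profiles n) -> nodew (h ++ [a]) -> F a <= G a) ->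
  sumL (all_profiles n) (fun a => W h a * F a) <= sumL (all_profiles n) (fun a => W h a * G a).
Proof. intros Hh H. apply sumL_le. intros a Hin. destruct (Req_dec (W h a) 0) as [E|E].
  - rewrite E. lra.
  - apply Rmult_le_compat_l; [apply W_nonneg|]. apply H; auto. apply W_child; auto. Qed.

Lemma sum_W_eq h (F G : profile -> R) : nodew h ->
  (forall a, In a (all_profiles n) -> nodew (h ++ [a]) -> F a = G a) ->
  sumL (all_profiles n) (fun a => W h a * F a) = sumL (all_profiles n) (fun a => W h a * G a).
Proof. intros Hh H. apply sumL_ext. intros a Hin. destruct (Req_dec (W h a) 0) as [E|E].
  - rewrite E. lra.
  - rewrite H; auto. apply W_child; auto. Qed.

Lemma delta_nonneg h : nodew h -> 0 <= delta h.
Proof. intros [Hh _]. unfold delta. pose proof (HRb i h Hh). lra. Qed.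

Lemma PT_range T : forall h, nodew h -> 0 <= PT T h <= 1.
Proof. induction T; intros h Hh; simpl; [lra|]. split.
  - apply sumL_nonneg. intros a Hin. destruct (Req_dec (W h a) 0) as [E|E]; [rewrite E; lra|].
    apply Rmult_le_pos; [apply W_nonneg|apply IHT; apply W_child; auto].
  - eapply Rle_trans; [|apply (W_sum_le h)].
    replace (sumL (all_profiles n) (W h)) with (sumL (all_profiles n) (fun a => W h a * 1)) by (apply sumL_ext; intros; lra).
    apply sum_W_le; auto. intros a _ Hch. apply IHT; auto. Qed.

Lemma PT_decr T : forall h, nodew h -> PT (S T) h <= PT T h.
Proof. induction T; intros h Hh.
  - simpl. eapply Rle_trans; [|apply (W_sum_le h)].
    replace (sumL (all_profiles n) (W h)) with (sumL (all_profiles n) (fun a => W h a * 1)) by (apply sumL_ext; intros; lra). apply Rle_refl.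
  - change (PT (S (S T)) h) with (sumL (all_profiles n) (fun a => W h a * PT (S T) (h ++ [a]))).
    change (PT (S T) h) with (sumL (all_profiles n) (fun a => W h a * PT T (h ++ [a]))).
    apply sum_W_le; auto. Qed.

Lemma DT_nonneg T : forall h, nodew h -> 0 <= DT T h.
Proof. induction T; intros h Hh; simpl; [apply delta_nonneg; auto|].
  apply sumL_nonneg. intros a Hin. destruct (Req_dec (W h a) 0) as [E|E]; [rewrite E; lra|].
  apply Rmult_le_pos; [apply W_nonneg|apply IHT; apply W_child; auto]. Qed.

Lemma AT_eq T : forall h, nodew h -> AT T h = E0 * (R0 * PT T h - DT T h).
Proof. induction T; intros h Hh.
  - simpl. destruct Hh as [_ Hw]. rewrite Vn_rent, Hw. unfold delta, E0. ring.
  - simpl. rewrite (sum_W_eq h _ (fun a => E0 * (R0 * PT T (h ++ [a]) - DT T (h ++ [a])))) by (first [assumption | intros; apply IHT; auto]).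
    rewrite <- (sumL_scal _ R0), <- sumL_minus, <- sumL_scal. apply sumL_ext. intros; ring. Qed.

Definition M1 := util rho (w0 - c + (v - s)) - util rho w0.

Lemma M1_pos : 0 < M1.
Proof. unfold M1. assert (util rho w0 < util rho (w0 - c + (v - s))) by (apply util_lt; auto; lra). lra. Qed.

Lemma T2 m : forall h, nodew h -> EUs i h m - util rho w0 <= M1 * (1 - PT m h).
Proof.
  induction m; intros h Hh.
  - simpl. unfold EUs. simpl. destruct Hh as [_ Hw]. rewrite Hw. lra.
  - destruct Hh as [[Hv [He Ha]] Hw] eqn:HH. unfold EUs. rewrite EU_step by auto.
    rewrite <- (sum_prob_const n reentry sigma h (util rho w0)), <- sumL_minus.
    simpl PT. rewrite Rmult_minus_distr_l, Rmult_1_r.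
    rewrite <- (sumL_scal _ M1).
    assert (Hsum : sumL (all_profiles n) (fun a => prob n reentry sigma h a * EU n reentry rho c v s sigma i (h ++ [a]) m - prob n reentry sigma h a * util rho w0)
      <= sumL (all_profiles n) (fun a => M1 * (prob n reentry sigma h a * (if bids a i then 1 else if stay i h a then 1 else 0)) - M1 * (W h a * PT m (h ++ [a])))).
    { apply sumL_le. intros a Hin. pose proof (prob_nonneg n reentry sigma h a Hvp) as Hp.
      destruct (bids a i) eqn:Hb.
      - assert (W h a = 0) by (unfold W, stay; rewrite Hb; auto). rewrite H.
        assert (EU n reentry rho c v s sigma i (h ++ [a]) m <= util rho (w0 - c + (v - s))).
        { eapply Rle_trans; [apply (EU_upper n reentry rho c v s sigma i Hvp Hr); lra|].
          apply util_le; auto. unfold Bd. pose proof (nonended_not_won i h He) as Hnw.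
          destruct (wealth_bid c v s i h a Hnw Hb) as [W1 W2]. rewrite W1, W2, Hw.
          destruct (Nat.eqb (nbidders a) 1); lra. }
        unfold M1. nra.
      - destruct (stay i h a) eqn:S.
        + unfold W. rewrite S. destruct (Req_dec (Pr h a) 0) as [E|E].
          * unfold Pr in *. rewrite E. lra.
          * assert (Hch : nodew (h ++ [a])) by (apply W_child; auto; unfold W; rewrite S; auto).
            specialize (IHm _ Hch). unfold EUs in IHm. unfold Pr. nra.
        + unfold W. rewrite S. pose proof (exit_EU i h a m ltac:(split; auto) Hb S) as X. unfold EUs in X. rewrite X, Hw. lra. }
    eapply Rle_trans; [exact Hsum|]. rewrite sumL_minus. unfold Rminus. apply Rplus_le_compat_r.
    rewrite sumL_scal.
    assert (HS : sumL (all_profiles n) (fun a => prob n reentry sigma h a * (if bids a i then 1 else if stay i h a then 1 else 0)) <= 1).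
    { eapply Rle_trans; [|right; apply (sum_prob n reentry sigma h)].
      apply sumL_le. intros a _. pose proof (prob_nonneg n reentry sigma h a Hvp).
      destruct (bids a i); [|destruct (stay i h a)]; lra. }
    pose proof M1_pos. nra.
Qed.

Lemma T2' T m : forall h, nodew h -> XT T m h <= M1 * (PT T h - PT (T + m) h).
Proof.
  induction T; intros h Hh.
  - simpl. apply T2; auto.
  - simpl XT. simpl PT. eapply Rle_trans.
    + apply (sum_W_le h _ (fun a => M1 * (PT T (h ++ [a]) - PT (T + m) (h ++ [a])))); auto.
    + right. rewrite <- sumL_minus. rewrite <- sumL_scal. apply sumL_ext. intros; ring.
Qed.

Lemma T1 T : forall h, nodew h -> Un_cv (fun m => XT T m h) (AT T h).
Proof.
  induction T; intros h Hh.
  - simpl. apply CV_minus; [|apply Un_cv_const]. destruct Hh as [[Hv [He Ha]] _].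
    apply conv_node; auto. apply (act_lt h i Ha).
  - simpl. apply Un_cv_sum. intros a Hin. destruct (Req_dec (W h a) 0) as [E|E]; [left; auto|right].
    apply IHT. apply W_child; auto.
Qed.



Lemma AT_bound T h L : nodew h -> (forall k, L <= PT k h) -> AT T h <= M1 * (PT T h - L).
Proof.
  intros Hh HL. pose proof (T1 T h Hh) as C.
  apply (lim_le _ _ _ C). intros m.
  eapply Rle_trans; [apply T2'; auto|]. pose proof M1_pos. specialize (HL (T + m)%nat).
  apply Rmult_le_compat_l; lra.
Qed.

Definition sS h := sumL (all_profiles n) (fun a => PQ h i 0 a * (if stay i h a then 1 else 0)).
Definition SDn h := sumL (all_profiles n) (fun a => PQ h i 0 a * (if stay i h a then delta (h ++ [a]) else 0)).

Lemma E0_pos : 0 < E0.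
Proof. apply exp_pos. Qed.

Lemma W_eq h a : nodew h -> In a (all_profiles n) -> W h a = (1 - sigma i h) * (PQ h i 0 a * (if stay i h a then 1 else 0)).
Proof. intros [[Hv [He Ha]] Hw] Hin. unfold W. destruct (stay i h a) eqn:S; [|lra].
  unfold stay in S. apply andb_true_iff in S as [S _]. apply andb_true_iff in S as [S _].
  apply negb_true_iff in S. rewrite (Pr_affine i h a). rewrite PQ1_nobid; auto; [ring|].
  apply all_profiles_length in Hin. rewrite Hin. apply (act_lt h i Ha). Qed.

Lemma NoBid_calc h : nodew h -> NoBid i h = util rho w0 + E0 * (R0 * sS h - SDn h).
Proof.
  intros Hh. destruct Hh as [[Hv [He Ha]] Hw] eqn:HH. unfold NoBid, sS, SDn.
  rewrite (sumL_ext _ _ (fun a => util rho w0 * PQ h i 0 a + E0 * (R0 * (PQ h i 0 a * (if stay i h a then 1 else 0)) - PQ h i 0 a * (if stay i h a then delta (h ++ [a]) else 0)))).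
  - rewrite sumL_plus, sumL_scal, PQ_sum, sumL_scal, sumL_minus, sumL_scal. ring.
  - intros a Hin. destruct (bids a i) eqn:Hb.
    + rewrite PQ0_bid by auto. ring.
    + destruct (stay i h a) eqn:S.
      * rewrite Vn_rent. rewrite (stay_wealth i h a) by (auto; split; auto). rewrite Hw. unfold delta, E0. ring.
      * rewrite (exit_Vn i h a) by (auto; split; auto). rewrite Hw. ring.
Qed.

Lemma Bid_calc h : nodew h -> Bid i h <= win_prob_if_bid n reentry sigma h i * util rho (w0 - c + (v - s))
   + (1 - win_prob_if_bid n reentry sigma h i) * (util rho (w0 - c) + exp (- rho * (w0 - c)) * R0).
Proof.
  intros Hh. destruct Hh as [[Hv [He Ha]] Hw] eqn:HH. pose proof (act_lt h i Ha) as Hi.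
  set (p := win_prob_if_bid n reentry sigma h i). set (Y := util rho (w0 - c) + exp (- rho * (w0 - c)) * R0).
  unfold Bid. rewrite (Bid_split i h (fun a => Vn i (h ++ [a]))) by auto. fold p.
  assert (Hon : Vn i (h ++ [onlyp n i]) = util rho (w0 - c + (v - s))).
  { assert (Hb : bids (onlyp n i) i = true) by (unfold bids; rewrite nth_onlyp, Nat.eqb_refl, andb_true_r; apply Nat.ltb_lt; auto).
    assert (Hnb : nbidders (onlyp n i) = 1%nat) by (apply nbidders_onlyp; auto).
    rewrite Vn_ended by (rewrite ended_app, Hnb; apply orb_true_r).
    destruct (wealth_bid c v s i h (onlyp n i) (nonended_not_won i h He) Hb) as [W1 _]. rewrite W1, Hnb, Hw. simpl. f_equal. }
  rewrite Hon.
  assert (Hmass : sumL (all_profiles n) (fun a => PQ h i 1 a * (if bids a i && negb (Nat.eqb (nbidders a) 1) then 1 else 0)) = 1 - p).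
  { pose proof (Bid_split i h (fun _ => 1) Ha Hi) as X. cbv beta in X.
    assert (Hs1 : sumL (all_profiles n) (fun a => PQ h i 1 a * 1) = 1) by (transitivity (sumL (all_profiles n) (PQ h i 1)); [apply sumL_ext; intros; ring|apply PQ_sum]).
    rewrite Hs1 in X. fold p in X. lra. }
  assert (Hle : sumL (all_profiles n) (fun a => PQ h i 1 a * (if bids a i && negb (Nat.eqb (nbidders a) 1) then Vn i (h ++ [a]) else 0))
     <= sumL (all_profiles n) (fun a => Y * (PQ h i 1 a * (if bids a i && negb (Nat.eqb (nbidders a) 1) then 1 else 0)))).
  { apply sumL_le. intros a Hin. destruct (bids a i) eqn:Hb; simpl; [|lra].
    destruct (Nat.eqb (nbidders a) 1) eqn:Hnb; simpl; [lra|].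
    destruct (Req_dec (PQ h i 1 a) 0) as [E|E]; [rewrite E; lra|].
    destruct (bid_node i h a (Qd h i 1) ltac:(split; auto) Hb Hnb Hin E) as [Hch W1].
    assert (Vn i (h ++ [a]) <= Y).
    { rewrite Vn_rent, W1, Hw. unfold Y. pose proof (HRb i _ Hch). pose proof (exp_pos (- rho * (w0 - c))).
      apply Rplus_le_compat_l. apply Rmult_le_compat_l; lra. }
    pose proof (PQ_nonneg h i 1 a ltac:(lra)). nra. }
  rewrite sumL_scal, Hmass in Hle. lra.
Qed.

Lemma local_ineq h : nodew h ->
  1 - sumL (all_profiles n) (W h) + Kc R0 * sumL (all_profiles n) (fun a => W h a * delta (h ++ [a])) <= Kc R0 * delta h.
Proof.
  intros Hh. pose proof Hh as Hh0. destruct Hh as [[Hv [He Ha]] Hw].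
  pose proof (act_lt h i Ha) as Hi.
  destruct (other_active n reentry h i Hn Hv He Ha) as [j [Hji Hja]].
  pose proof (act_lt h j Hja) as Hj.
  assert (Hsj : sigma j h = sigma i h) by (symmetry; apply Hsym; auto).
  set (q := sigma i h). set (p := win_prob_if_bid n reentry sigma h i).
  assert (EW1 : sumL (all_profiles n) (W h) = (1 - q) * sS h).
  { unfold sS. rewrite <- sumL_scal. apply sumL_ext. intros a Hin. apply W_eq; auto. }
  assert (EW2 : sumL (all_profiles n) (fun a => W h a * delta (h ++ [a])) = (1 - q) * SDn h).
  { unfold SDn. rewrite <- sumL_scal. apply sumL_ext. intros a Hin. rewrite W_eq by auto.
    fold q. destruct (stay i h a); ring. }
  rewrite EW1, EW2.
  pose proof (Hvp i h) as Hq.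
  assert (Hs : 0 <= sS h <= 1).
  { unfold sS. split.
    - apply sumL_nonneg. intros a _. apply Rmult_le_pos; [apply PQ_nonneg; lra|destruct (stay i h a); lra].
    - eapply Rle_trans; [|right; apply (PQ_sum h i 0)]. apply sumL_le. intros a _. pose proof (PQ_nonneg h i 0 a ltac:(lra)).
      destruct (stay i h a); lra. }
  assert (Hgfac : forall m, In m (seq 0 n) -> 0 <= (if active n reentry h m && negb (Nat.eqb m i) then 1 - sigma m h else 1) <= 1).
  { intros m _. destruct (active n reentry h m && negb (Nat.eqb m i)); pose proof (Hvp m h); lra. }
  assert (Hjin : In j (seq 0 n)) by (apply in_seq; lia).
  assert (Hp : 0 <= p <= 1) by apply wp_range.
  assert (Hpq : p <= 1 - q).
  { unfold p, win_prob_if_bid. eapply Rle_trans; [apply (prod_le_factor _ _ j Hjin Hgfac)|].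
    cbv beta. unfold act in Hja. rewrite Hja. apply Nat.eqb_neq in Hji. rewrite Hji. simpl. rewrite Hsj. fold q. lra. }
  assert (Hq1 : q = 1 -> p = 0).
  { intros E. unfold p, win_prob_if_bid. apply (prod_zero _ _ j Hjin). cbv beta. unfold act in Hja. rewrite Hja.
    apply Nat.eqb_neq in Hji. rewrite Hji. simpl. rewrite Hsj. fold q. lra. }
  assert (Hnb : q < 1 -> R0 - delta h = R0 * sS h - SDn h).
  { intros Hlt. pose proof (NoBid_eq i h (proj1 Hh0) Hlt) as E. rewrite NoBid_calc in E by auto.
    rewrite Vn_rent, Hw in E. unfold delta. fold E0 in E. pose proof E0_pos.
    assert (E0 * rent i h = E0 * (R0 * sS h - SDn h)) by lra.
    apply Rmult_eq_reg_l in H0; lra. }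
  assert (Hbid : 0 < q -> R0 - delta h <= p * Mc + (1 - p) * (R0 - gc)).
  { intros Hgt. pose proof (Bid_eq i h (proj1 Hh0) Hgt) as E. pose proof (Bid_calc h Hh0) as B.
    fold p in B. rewrite <- E in B. rewrite Vn_rent, Hw in B. fold E0 in B.
    replace (w0 - c + (v - s)) with (w0 + (v - s - c)) in B by ring.
    replace (w0 - c) with (w0 + - c) in B by ring.
    rewrite !util_cara in B. fold E0 in B.
    replace (exp (- rho * (w0 + - c))) with (E0 * exp (rho * c)) in B
      by (unfold E0; rewrite <- exp_plus; f_equal; ring).
    unfold delta. unfold Mc, gc.
    pose proof E0_pos.
    assert (Hec : exp (rho * c) <= 1).
    { destruct (Req_dec rho 0) as [->|Hr0]; [rewrite Rmult_0_l, exp_0; lra|].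
      left. rewrite <- exp_0. apply exp_increasing. nra. }
    assert (B2 : E0 * rent i h <= E0 * (p * util rho (v - s - c) + (1 - p) * (util rho (- c) + exp (rho * c) * R0))) by lra.
    apply Rmult_le_reg_l in B2; auto.
    assert ((1 - p) * (exp (rho * c) * R0) <= (1 - p) * R0).
    { apply Rmult_le_compat_l; [lra|]. assert (exp (rho * c) * R0 <= 1 * R0) by (apply Rmult_le_compat_r; lra). lra. }
    nra. }
  assert (Hexit : q * p <= 1 - sS h).
  { assert (P1 : sigma j h * p <= PQ h i 0 (onlyp n j)).
    { unfold p, win_prob_if_bid, PQ, onlyp. rewrite prof_prob_map.
      apply (prod_compare _ _ _ j); [apply seq_NoDup|apply Hvp| | auto |].
      - intros m Hm Hmj. unfold fac, Qd, Qx. apply Nat.eqb_neq in Hmj. rewrite Hmj.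
        unfold act. destruct (Nat.eqb_spec m i) as [->|Hmi].
        + unfold act in Ha. rewrite Ha. simpl. lra.
        + destruct (active n reentry h m); simpl; auto.
      - intros _. unfold fac, Qd, Qx. rewrite Nat.eqb_refl. unfold act in Hja |- *. rewrite Hja.
        apply Nat.eqb_neq in Hji. rewrite Hji. auto. }
    rewrite Hsj in P1. fold q in P1.
    assert (P2 : sS h + PQ h i 0 (onlyp n j) <= 1).
    { unfold sS. rewrite <- (sum_point n (onlyp n j) (PQ h i 0)) by apply onlyp_length.
      rewrite <- sumL_plus. eapply Rle_trans; [|right; apply (PQ_sum h i 0)]. apply sumL_le. intros a Hin.
      pose proof (PQ_nonneg h i 0 a ltac:(lra)).
      destruct (list_eq_dec bool_dec a (onlyp n j)) as [->|Hne].
      - assert (stay i h (onlyp n j) = false).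
        { unfold stay. rewrite ended_app, nbidders_onlyp by auto. rewrite He. simpl.
          rewrite andb_false_r. auto. }
        rewrite H0. lra.
      - destruct (stay i h a); lra. }
    lra. }
  pose proof (local_num q (sS h) (SDn h) (delta h) R0 p Mc gc Hq Hs (delta_nonneg h Hh0) HR0 Mc_pos gc_pos
      (proj1 Hp) Hpq Hnb Hbid Hexit Hq1) as LN.
  cbv zeta in LN. unfold Kc. exact LN.
Qed.

Lemma L1 T : forall h, nodew h -> 1 - PT T h <= Kc R0 * (delta h - DT T h).
Proof.
  induction T; intros h Hh.
  - simpl. lra.
  - simpl PT. simpl DT. pose proof (local_ineq h Hh) as LI.
    assert (A : sumL (all_profiles n) (fun a => W h a * (1 - PT T (h ++ [a])))
               <= sumL (all_profiles n) (fun a => W h a * (Kc R0 * (delta (h ++ [a]) - DT T (h ++ [a]))))).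
    { apply sum_W_le; auto. }
    assert (B : sumL (all_profiles n) (fun a => W h a * (1 - PT T (h ++ [a])))
              = sumL (all_profiles n) (W h) - sumL (all_profiles n) (fun a => W h a * PT T (h ++ [a]))).
    { rewrite <- sumL_minus. apply sumL_ext. intros; ring. }
    assert (C : sumL (all_profiles n) (fun a => W h a * (Kc R0 * (delta (h ++ [a]) - DT T (h ++ [a]))))
              = Kc R0 * sumL (all_profiles n) (fun a => W h a * delta (h ++ [a])) - Kc R0 * sumL (all_profiles n) (fun a => W h a * DT T (h ++ [a]))).
    { rewrite <- !sumL_scal, <- sumL_minus. apply sumL_ext. intros; ring. }
    lra.
Qed.

Lemma Kc_pos : 0 < Kc R0.
Proof. unfold Kc. pose proof Mc_pos. pose proof gc_pos.
  assert (0 < gc / (2 * (Mc + gc))) by (apply Rdiv_lt_0_compat; lra).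
  assert (0 < 2 / gc) by (apply Rdiv_lt_0_compat; lra).
  assert (0 < 1 / R0) by (apply Rdiv_lt_0_compat; lra).
  assert (0 < 1 / (gc / (2 * (Mc + gc)) * (gc / (2 * (Mc + gc))) * R0)) by
    (apply Rdiv_lt_0_compat; [lra|apply Rmult_lt_0_compat; [nra|lra]]).
  lra. Qed.

Lemma M1_eq : M1 = E0 * Mc.
Proof. unfold M1, Mc, E0. replace (w0 - c + (v - s)) with (w0 + (v - s - c)) by ring. rewrite util_cara. ring. Qed.

Lemma no_near_sup h : nodew h -> delta h < R0 / (2 * (Kc R0 * R0 + 1)) -> False.
Proof.
  intros Hh Hd. pose proof Kc_pos as HK. pose proof E0_pos as HE. pose proof Mc_pos as HM.
  assert (Hd0 : 0 <= delta h) by (apply delta_nonneg; auto).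
  assert (HKd : (Kc R0 * R0 + 1) * delta h < R0 / 2).
  { apply (Rmult_lt_compat_l (Kc R0 * R0 + 1)) in Hd; [|nra].
    replace ((Kc R0 * R0 + 1) * (R0 / (2 * (Kc R0 * R0 + 1)))) with (R0 / 2) in Hd by (field; nra). lra. }
  assert (HA : forall T, E0 * (R0 / 2) < AT T h).
  { intros T. rewrite AT_eq by auto. pose proof (L1 T h Hh). pose proof (DT_nonneg T h Hh).
    pose proof (PT_range T h Hh).
    assert (R0 * PT T h - DT T h > R0 / 2).
    { assert (PT T h >= 1 - Kc R0 * delta h) by nra.
      assert (DT T h <= delta h) by nra. nra. }
    nra. }
  set (Sset := fun x => exists k, x = - PT k h).
  assert (Hb : bound Sset) by (exists 0; intros x [k ->]; pose proof (PT_range k h Hh); lra).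
  assert (Hne : exists x, Sset x) by (exists (- PT 0 h); exists 0%nat; auto).
  destruct (completeness Sset Hb Hne) as [mL [Hub Hleast]].
  assert (HL : forall k, - mL <= PT k h) by (intros k; specialize (Hub (- PT k h) (ex_intro _ k eq_refl)); lra).
  set (eta := R0 / (2 * Mc)).
  assert (Heta : 0 < eta) by (unfold eta; apply Rdiv_lt_0_compat; lra).
  assert (Hex : exists k, PT k h < - mL + eta).
  { apply Classical_Prop.NNPP. intros Hn'.
    assert (is_upper_bound Sset (mL - eta)).
    { intros x [k ->]. apply Rnot_lt_le. intros Hcc. apply Hn'. exists k. lra. }
    specialize (Hleast _ H). lra. }
  destruct Hex as [k Hk].
  pose proof (AT_bound k h (- mL) Hh HL) as AB. rewrite M1_eq in AB.
  specialize (HA k).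
  assert (E0 * Mc * (PT k h - - mL) <= E0 * Mc * eta).
  { apply Rmult_le_compat_l; [nra|]. pose proof (HL k). lra. }
  assert (E0 * Mc * eta = E0 * (R0 / 2)) by (unfold eta; field; lra).
  lra.
Qed.

End Tree.

Definition Rset (r : R) := exists j h, node j h /\ r = rent j h.

Lemma rent_zero j h : node j h -> rent j h = 0.
Proof.
  intros Hjh. pose proof (node_lt j h Hjh) as Hj. destruct Hjh as [Hv [He Ha]] eqn:HH.
  pose proof (rent_nonneg j h Hv He Hj) as H0.
  destruct (Req_dec (rent j h) 0) as [E|E]; auto. exfalso.
  assert (Hb : bound Rset).
  { exists (util rho (v - s)). intros x [j' [h' [Hn' ->]]]. destruct Hn' as [A [B C]].
    apply rent_upper; auto. apply (act_lt h' j' C). }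
  assert (Hne : exists x, Rset x) by (exists (rent j h); exists j, h; split; auto).
  destruct (completeness Rset Hb Hne) as [R0 [Hub Hleast]].
  assert (HR0 : 0 < R0).
  { assert (rent j h <= R0) by (apply Hub; exists j, h; split; auto). lra. }
  assert (HRb : forall j' h', node j' h' -> rent j' h' <= R0) by (intros; apply Hub; exists j', h'; split; auto).
  set (eps := R0 / (2 * (Kc R0 * R0 + 1))).
  assert (HK : 0 < Kc R0) by (apply Kc_pos; auto).
  assert (Heps : 0 < eps) by (unfold eps; apply Rdiv_lt_0_compat; nra).
  assert (Hex : exists j' h', node j' h' /\ R0 - eps < rent j' h').
  { apply Classical_Prop.NNPP. intros Hn'.
    assert (is_upper_bound Rset (R0 - eps)).
    { intros x [j' [h' [Hn'' ->]]]. apply Rnot_lt_le. intros Hcc. apply Hn'. exists j', h'. split; auto. }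
    specialize (Hleast _ H). lra. }
  destruct Hex as [j' [h' [Hn' Hrr]]].
  apply (no_near_sup R0 j' (wealth c v s j' h') HR0 HRb h'); [split; auto|].
  unfold delta. fold eps. lra.
Qed.

Lemma final j h : node j h -> win_prob_if_bid n reentry sigma h j = util rho c / util rho (v - s).
Proof.
  intros Hjh. pose proof Hjh as Hjh0. destruct Hjh as [Hv [He Ha]].
  pose proof (act_lt h j Ha) as Hj.
  set (w := wealth c v s j h). set (p := win_prob_if_bid n reentry sigma h j).
  assert (HV : Vn j h = util rho w) by (rewrite Vn_rent, rent_zero by auto; fold w; ring).
  assert (Hbid : Bid j h = p * util rho (w - c + (v - s)) + (1 - p) * util rho (w - c)).
  { unfold Bid. rewrite (Bid_split j h (fun a => Vn j (h ++ [a]))) by auto. fold p.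
    assert (Hb : bids (onlyp n j) j = true) by (unfold bids; rewrite nth_onlyp, Nat.eqb_refl, andb_true_r; apply Nat.ltb_lt; auto).
    assert (Hnb : nbidders (onlyp n j) = 1%nat) by (apply nbidders_onlyp; auto).
    rewrite Vn_ended by (rewrite ended_app, Hnb; apply orb_true_r).
    destruct (wealth_bid c v s j h (onlyp n j) (nonended_not_won j h He) Hb) as [W1 _]. rewrite W1, Hnb. simpl. fold w.
    replace (w - c + (v - s)) with (w - c + (v - s)) by ring. f_equal.
    pose proof (Bid_split j h (fun _ => 1) Ha Hj) as X. cbv beta in X.
    assert (Hs1 : sumL (all_profiles n) (fun a => PQ h j 1 a * 1) = 1) by (transitivity (sumL (all_profiles n) (PQ h j 1)); [apply sumL_ext; intros; ring|apply PQ_sum]).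
    rewrite Hs1 in X. fold p in X.
    transitivity (util rho (w - c) * sumL (all_profiles n) (fun a => PQ h j 1 a * (if bids a j && negb (Nat.eqb (nbidders a) 1) then 1 else 0))).
    - rewrite <- sumL_scal. apply sumL_ext. intros a Hin. destruct (bids a j) eqn:Hba; simpl; [|ring].
      destruct (Nat.eqb (nbidders a) 1) eqn:Hnba; simpl; [ring|].
      destruct (Req_dec (PQ h j 1 a) 0) as [E|E]; [rewrite E; ring|].
      destruct (bid_node j h a (Qd h j 1) Hjh0 Hba Hnba Hin E) as [Hch W2].
      rewrite Vn_rent, rent_zero, W2 by auto. fold w. ring.
    - replace (sumL (all_profiles n) (fun a => PQ h j 1 a * (if bids a j && negb (Nat.eqb (nbidders a) 1) then 1 else 0))) with (1 - p) by lra. ring. }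
  pose proof (Hvp j h) as Hq.
  assert (Hqpos : 0 < sigma j h).
  { destruct (Rle_lt_or_eq_dec 0 (sigma j h) (proj1 Hq)) as [|E]; auto. exfalso.
    assert (Hp1 : p = 1).
    { unfold p, win_prob_if_bid. apply prod_one. intros m Hm.
      destruct (active n reentry h m && negb (Nat.eqb m j)) eqn:Em; auto.
      apply andb_true_iff in Em as [Em _]. rewrite (Hsym h m j Hv Em Ha), <- E. lra. }
    pose proof (Bid_le j h Hjh0). rewrite Hbid, HV, Hp1 in H.
    assert (util rho w < util rho (w - c + (v - s))) by (apply util_lt; auto; lra). lra. }
  pose proof (Bid_eq j h Hjh0 Hqpos) as E. rewrite Hbid, HV in E.
  replace (w - c + (v - s)) with (w + (v - s - c)) in E by ring.
  replace (w - c) with (w + - c) in E by ring.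
  rewrite !util_cara in E.
  assert (E2 : exp (- rho * w) * (p * util rho (v - s - c) + (1 - p) * util rho (- c)) = exp (- rho * w) * 0) by lra.
  apply Rmult_eq_reg_l in E2; [|apply Rgt_not_eq, exp_pos].
  assert (U1 : util rho (v - s - c) = util rho (- c) + exp (- rho * - c) * util rho (v - s)).
  { rewrite <- util_cara. f_equal. ring. }
  assert (U2 : util rho (- c) = - (exp (- rho * - c) * util rho c)).
  { pose proof (util_cara rho (- c) c) as U. replace (- c + c) with 0 in U by ring. rewrite util_0 in U. lra. }
  rewrite U1, U2 in E2.
  assert (E3 : exp (- rho * - c) * (p * util rho (v - s) - util rho c) = exp (- rho * - c) * 0) by lra.
  apply Rmult_eq_reg_l in E3; [|apply Rgt_not_eq, exp_pos].
  assert (Hpos : 0 < util rho (v - s)) by (apply util_pos; auto; lra).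
  field_simplify_eq; [lra|lra].
Qed.

End Eq.

Theorem mainTheorem3 :
  forall (n : nat) (reentry : bool) (rho c v s : R),
    (2 <= n)%nat -> 0 < v -> 0 < c -> 0 <= s -> c < v - s -> rho <= 0 ->
    forall sigma : strategy_profile,
      is_SPE n reentry rho c v s sigma ->
      symmetric n reentry sigma ->
      forall (h : history) (i : nat),
        valid_history n reentry h -> ended h = false ->
        active n reentry h i = true ->
        win_prob_if_bid n reentry sigma h i = util rho c / util rho (v - s).
Proof.
  intros n reentry rho c v s Hn Hv Hc Hs Hcvs Hr sigma Hspe Hsym h i Hvh He Ha.
  apply (final n reentry rho c v s sigma Hn Hc Hcvs Hr Hspe Hsym i h). split; auto.
Qed.
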